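(* Let $N\ge 1$, let $\mathcal{S}_{>0}=\{\lambda\in\mathbb{R}^N:\lambda_i>0,\ \sum_{i=1}^N\lambda_i=1\}$ be equipped with the Fisher--Rao metric $g_{ij}(\lambda)=\delta_{ij}/(4\lambda_i)$, and let $\beta_1,\ldots,\beta_N>0$ be the singular values of an operator $B$. Define the aligned transport map $\Phi_B:\mathcal{S}_{>0}\to\mathcal{S}_{>0}$ by \[ \Phi_B(\lambda)_i=\frac{\beta_i^2\lambda_i}{\sum_{j=1}^N\beta_j^2\lambda_j}. \] Then $\Phi_B$ is an isometry of $(\mathcal{S}_{>0},g)$ if and only if $\beta_1=\beta_2=\cdots=\beta_N$.
   Context: $\Phi_B$ is the map on spectral states induced by composing with $B$ under SVD alignment (the right singular vectors of $B$ coincide with the left singular vectors of the preceding operator $A$): if $\lambda=\lambda(A)$ is the normalised squared-singular-value vector of $A$, then $\Phi_B(\lambda)=\lambda(BA)$. The Fisher--Rao distance induced by $g$ is $d(\lambda,\mu)=2\arccos\big(\sum_i\sqrt{\lambda_i\mu_i}\big)$. *)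

(* Defs.v *)
From HB Require Import structures.
From mathcomp Require Import all_boot all_order all_algebra.
From mathcomp Require Import all_classical all_reals all_analysis.
Set Implicit Arguments. Unset Strict Implicit. Unset Printing Implicit Defensive.
Import Order.TTheory GRing.Theory Num.Theory.
Local Open Scope ring_scope.

Section FR.
Variables (R : realType) (N : nat).

Definition in_simplex_pos (l : 'I_N -> R) : Prop :=
  (forall i, 0 < l i) /\ \sum_(i < N) l i = 1.

Definition tangent (v : 'I_N -> R) : Prop := \sum_(i < N) v i = 0.

Definition FR_metric (l u w : 'I_N -> R) : R :=
  \sum_(i < N) u i * w i / (4 * l i).

Definition Phi (beta : 'I_N -> R) (l : 'I_N -> R) : 'I_N -> R :=
  fun i => beta i ^+ 2 * l i / \sum_(j < N) beta j ^+ 2 * l j.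

Definition pushforward (F : ('I_N -> R) -> ('I_N -> R)) (l v : 'I_N -> R)
  : 'I_N -> R :=
  fun i => derive1 (fun t : R => F (fun j => l j + t * v j) i) 0.

Definition FR_isometry (F : ('I_N -> R) -> ('I_N -> R)) : Prop :=
  [/\ (forall l, in_simplex_pos l -> in_simplex_pos (F l)),
      (forall mu, in_simplex_pos mu ->
         exists l, in_simplex_pos l /\ F l = mu),
      (forall l1 l2, in_simplex_pos l1 -> in_simplex_pos l2 ->
         F l1 = F l2 -> l1 = l2) &
      (forall l u w, in_simplex_pos l -> tangent u -> tangent w ->
         FR_metric (F l) (pushforward F l u) (pushforward F l w)
         = FR_metric l u w)].

End FR.

(* Main.v *)
Require Import Defs.
From HB Require Import structures.
From mathcomp Require Import all_boot all_order all_algebra.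
From mathcomp Require Import all_classical all_reals all_analysis.
From mathcomp Require Import ring lra.
Import Order.TTheory GRing.Theory Num.Theory.
Local Open Scope ring_scope.

Lemma derrat (R : realType) (c d S T : R) : S != 0 ->
  derive1 (fun t : R => (c + t * d) / (S + t * T)) 0 = (d * S - c * T) / S ^+ 2.
Proof.
move=> S0.
have h1 : is_derive (0:R) 1 (fun t : R => c + t * d) d.
  have -> : (fun t : R => c + t * d) = cst c + ( *%R ^~ d) by apply/funext => t.
  apply: is_derive_eq. by rewrite scaler0 add0r add0r /GRing.scale /= mulr1.
have h2 : is_derive (0:R) 1 (fun t : R => S + t * T) T.
  have -> : (fun t : R => S + t * T) = cst S + ( *%R ^~ T) by apply/funext => t.
  apply: is_derive_eq. by rewrite scaler0 add0r add0r /GRing.scale /= mulr1.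
have h3 := is_deriveV _ h2.
rewrite mul0r addr0 in h3.
have h4 := is_deriveM h1 (h3 S0).
rewrite derive1E.
have -> : (fun t : R => (c + t * d) / (S + t * T)) = (fun t : R => c + t * d) * (fun t => (S + t * T)^-1) by [].
rewrite (@derive_val _ _ _ _ _ _ _ h4) /= !mul0r !addr0.
rewrite /GRing.scale /=. field. done.
Qed.

Lemma pf_Phi (R : realType) (N : nat) (beta l v : 'I_N -> R) (k : 'I_N) :
  \sum_(j < N) beta j ^+ 2 * l j != 0 ->
  Defs.pushforward (Phi beta) l v k =
  beta k ^+ 2 * (v k * (\sum_(j < N) beta j ^+ 2 * l j)
                 - l k * (\sum_(j < N) beta j ^+ 2 * v j))
  / (\sum_(j < N) beta j ^+ 2 * l j) ^+ 2.
Proof.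
move=> S0; rewrite /Defs.pushforward.
have -> : (fun t : R => Phi beta (fun j => l j + t * v j) k) =
  (fun t => (beta k ^+ 2 * l k + t * (beta k ^+ 2 * v k)) /
     (\sum_(j < N) beta j ^+ 2 * l j + t * \sum_(j < N) beta j ^+ 2 * v j)).
  apply/funext => t; rewrite /Phi; congr (_ / _); first by ring.
  rewrite mulr_sumr -big_split; apply: eq_bigr => j _ /=; ring.
rewrite derrat //; field; done.
Qed.

Lemma sum_delta (R : realType) (N : nat) (i : 'I_N) (F : 'I_N -> R) :
  \sum_(k < N) (k == i)%:R * F k = F i.
Proof.
rewrite (bigD1 i) //= eqxx mul1r big1 ?addr0 // => k /negbTE ->; by rewrite mul0r.
Qed.

Lemma sum_u (R : realType) (N : nat) (i j : 'I_N) (F : 'I_N -> R) :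
  \sum_(k < N) ((k == i)%:R - (k == j)%:R) * F k = F i - F j.
Proof.
under eq_bigr do rewrite mulrBl.
by rewrite sumrB !sum_delta.
Qed.

Lemma metric_Phi (R : realType) (N : nat) (beta l u : 'I_N -> R) :
  (0 < N)%N -> (forall k, 0 < l k) -> (forall k, 0 < beta k) ->
  FR_metric (Phi beta l) (Defs.pushforward (Phi beta) l u)
     (Defs.pushforward (Phi beta) l u) =
  ((\sum_(j < N) beta j ^+ 2 * l j) ^+ 2 *
      (\sum_(k < N) u k * (u k * beta k ^+ 2 / l k))
   - (\sum_(j < N) beta j ^+ 2 * l j) * (\sum_(j < N) beta j ^+ 2 * u j) ^+ 2)
  / (4 * (\sum_(j < N) beta j ^+ 2 * l j) ^+ 3).
Proof.
move=> hN lp bp.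
have Sp : 0 < \sum_(j < N) beta j ^+ 2 * l j.
  rewrite lt_def sumr_ge0 ?andbT; last by move=> j _; rewrite mulr_ge0 // ?ltW ?exprn_gt0.
  rewrite psumr_neq0; last by move=> j _; rewrite mulr_ge0 // ?ltW ?exprn_gt0.
  apply/hasP; exists (Ordinal hN); first by rewrite mem_index_enum.
  by rewrite mulr_gt0 ?exprn_gt0.
rewrite /FR_metric.
under eq_bigr => k _ do rewrite pf_Phi ?(gt_eqF Sp) // /Phi.
set S := \sum_(j < N) beta j ^+ 2 * l j.
set T := \sum_(j < N) beta j ^+ 2 * u j.
have S0 : S != 0 by rewrite gt_eqF.
transitivity (\sum_(k < N) (S ^+ 2 * (u k * (u k * beta k ^+ 2 / l k))
   - 2 * S * T * (beta k ^+ 2 * u k) + T ^+ 2 * (beta k ^+ 2 * l k)) / (4 * S ^+ 3)).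
  apply: eq_bigr => k _.
  have l0 : l k != 0 by rewrite gt_eqF.
  have b0 : beta k != 0 by rewrite gt_eqF.
  field. by rewrite S0 l0 b0.
rewrite -mulr_suml big_split sumrB /= -!mulr_sumr -/T -/S.
field. by rewrite S0.
Qed.

Lemma sum_lin1 (R : realType) (N : nat) (x y : R) (F : 'I_N -> R) :
  \sum_(j < N) (x + F j - y) = x * N%:R + \sum_(j < N) F j - y * N%:R.
Proof.
rewrite sumrB (eq_bigr (fun j => x - - F j)) => [|j _]; last by rewrite opprK.
by rewrite sumrB sumrN opprK !sumr_const card_ord !mulr_natr.
Qed.
Lemma sum_lin2 (R : realType) (N : nat) (x y : R) (F : 'I_N -> R) :
  \sum_(j < N) (x * F j + y) = x * \sum_(j < N) F j + y * N%:R.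
Proof.
rewrite (eq_bigr (fun j => x * F j - - y)) => [|j _]; last by rewrite opprK.
by rewrite sumrB sumrN opprK !sumr_const card_ord !mulr_natr mulr_sumr.
Qed.

Theorem mainTheorem6 (R : realType) (N : nat) (hN : (1 <= N)%N)
  (beta : 'I_N -> R) (hbeta : forall i, 0 < beta i) :
  FR_isometry (Phi beta) <-> (forall i j, beta i = beta j).
Proof.
have Nn0 : (N%:R : R) != 0 by rewrite pnatr_eq0 -lt0n.
have Ngt0 : (0 < N%:R :> R) by rewrite ltr0n.
split.
- move=> [_ _ _ Hm].
  set l0 := fun _ : 'I_N => (N%:R : R)^-1.
  have l0p : forall k, 0 < l0 k by move=> k; rewrite /l0 invr_gt0.
  have l0s : in_simplex_pos l0.
    split => //; rewrite /l0 sumr_const card_ord -[_ *+ N]mulr_natr mulVf //.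
  set sb := \sum_(j < N) beta j ^+ 2.
  set m := sb / N%:R.
  have sbp : 0 < sb.
    rewrite lt_def sumr_ge0 ?andbT; last by move=> j _; rewrite ?ltW ?exprn_gt0.
    rewrite psumr_neq0; last by move=> j _; rewrite ?ltW ?exprn_gt0.
    apply/hasP; exists (Ordinal hN); first by rewrite mem_index_enum.
    by rewrite exprn_gt0.
  have m0 : m != 0 by rewrite gt_eqF // divr_gt0.
  have key : forall i j, i != j -> (beta i ^+ 2 - beta j ^+ 2) ^+ 2 =
      N%:R * m * (beta i ^+ 2 + beta j ^+ 2 - 2 * m).
    move=> i j ij.
    set u := fun k : 'I_N => (k == i)%:R - (k == j)%:R : R.
    have ui : u i = 1 by rewrite /u eqxx (negbTE ij) subr0.
    have uj : u j = -1 by rewrite /u eqxx eq_sym (negbTE ij) sub0r.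
    have tu : tangent u.
      rewrite /tangent; under eq_bigr do rewrite -[u _]mulr1.
      by rewrite sum_u subrr.
    have E := Hm l0 u u l0s tu tu.
    rewrite metric_Phi // in E.
    have hS : \sum_(j0 < N) beta j0 ^+ 2 * l0 j0 = m by rewrite /l0 -mulr_suml.
    have hT : \sum_(j0 < N) beta j0 ^+ 2 * u j0 = beta i ^+ 2 - beta j ^+ 2.
      by under eq_bigr do rewrite mulrC; rewrite sum_u.
    have hX : \sum_(k < N) u k * (u k * beta k ^+ 2 / l0 k) =
        (beta i ^+ 2 + beta j ^+ 2) * N%:R.
      rewrite sum_u ui uj /l0 invrK; ring.
    have hR : FR_metric l0 u u = N%:R / 2.
      rewrite /FR_metric; under eq_bigr do rewrite -mulrA.
      by rewrite sum_u ui uj /l0; field.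
    rewrite hS hT hX hR in E.
    apply/eqP; rewrite -subr_eq0; apply/eqP.
    transitivity (- (4 * m ^+ 2) * ((m ^+ 2 * ((beta i ^+ 2 + beta j ^+ 2) * N%:R) -
       m * (beta i ^+ 2 - beta j ^+ 2) ^+ 2) / (4 * m ^+ 3) - N%:R / 2)).
      by field.
    by rewrite E subrr mulr0.
  pose b := fun k => beta k ^+ 2.
  have pt : forall i j, (b i - b j) ^+ 2 =
      N%:R * m * (b i + b j - 2 * m) - (j == i)%:R * (N%:R * m * (2 * b i - 2 * m)).
    move=> i j; case: (eqVneq j i) => [->|ji].
      rewrite subrr mul1r expr0n /=; ring.
    by rewrite mul0r subr0 /b key // eq_sym.
  have s1 : forall i, \sum_(j < N) (b i - b j) ^+ 2 =
      (N%:R * m * (N%:R - 2)) * b i + N%:R * m * (sb - 2 * m * N%:R + 2 * m).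
    move=> i; rewrite (eq_bigr _ (fun j _ => pt i j)) sumrB.
    rewrite (@sum_delta R N i (fun _ => N%:R * m * (2 * b i - 2 * m))).
    rewrite -mulr_sumr (@sum_lin1 R N (b i) (2 * m) b) -/sb; ring.
  have tot : \sum_(i < N) \sum_(j < N) (b i - b j) ^+ 2 = 0.
    under eq_bigr do rewrite s1.
    by rewrite sum_lin2 -/sb /m; field.
  move=> i j.
  have h0 := psumr_eq0P (fun i _ => sumr_ge0 _ (fun j _ => sqr_ge0 (b i - b j))) tot (i := i) isT.
  have := psumr_eq0P (fun j _ => sqr_ge0 (b i - b j)) h0 (i := j) isT.
  move/eqP; rewrite sqrf_eq0 subr_eq0 /b eqrXn2 ?ltW //.
  by move/eqP.
- move=> Heq.
  set c := beta (Ordinal hN).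
  have c0 : c != 0 by rewrite /c gt_eqF ?hbeta.
  have bc : forall j, beta j = c by move=> j; apply: Heq.
  have hS : forall l : 'I_N -> R, in_simplex_pos l ->
      \sum_(j < N) beta j ^+ 2 * l j = c ^+ 2.
    move=> l [_ hl]; under eq_bigr do rewrite bc.
    by rewrite -mulr_sumr hl mulr1.
  have fx : forall l, in_simplex_pos l -> Phi beta l = l.
    move=> l hl; apply/funext => i; rewrite /Phi hS // bc; field.
    done.
  have pf : forall l v, in_simplex_pos l -> tangent v ->
      Defs.pushforward (Phi beta) l v = v.
    move=> l v hl tv; apply/funext => k.
    rewrite pf_Phi hS ?expf_neq0 //.
    have -> : \sum_(j < N) beta j ^+ 2 * v j = 0.
      by under eq_bigr do rewrite bc; rewrite -mulr_sumr tv mulr0.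
    by rewrite bc; field.
  split.
  + by move=> l hl; rewrite fx.
  + by move=> mu hmu; exists mu; rewrite fx.
  + by move=> l1 l2 h1 h2; rewrite !fx.
  + by move=> l u w hl tu tw; rewrite fx // !pf.
Qed.
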